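(* Let $m$ be a positive integer, let $S=\mathbb{Q}[t^{\pm1}]/((t^2-3t+1)^m)$ viewed as an abelian group, and let $\Gamma_1=S\rtimes\langle\mu\rangle$, where $\mu$ generates an infinite cyclic group acting on $S$ by multiplication by $t$ (i.e.\ $\mu^{-1}s\mu=st$). Let $\mathcal{R}_1=(\mathbb{Q}\Gamma_1)(\mathbb{Q}[\Gamma_1,\Gamma_1]\setminus\{0\})^{-1}$ be the Ore localization. Then the ring $\mathcal{R}_1$ is simple, i.e.\ it has no two-sided ideals other than $0$ and $\mathcal{R}_1$.
   Context: $\mathcal{R}_1$ is isomorphic to the skew Laurent polynomial ring $\mathbb{K}_1[\mu^{\pm1}]$, where $\mathbb{K}_1$ is the (commutative) quotient field of $\mathbb{Z}[S]$, with $a\mu=\mu\alpha(a)$ for the automorphism $\alpha$ of $\mathbb{K}_1$ induced by multiplication by $t$ on $S$. *)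

(* Defs.v *)
From HB Require Import structures.
From mathcomp Require Import all_boot all_order all_algebra.
From mathcomp Require Import finmap.
Set Implicit Arguments. Unset Strict Implicit. Unset Printing Implicit Defensive.
Import Order.TTheory GRing.Theory Num.Theory.
Local Open Scope ring_scope.

Definition fpoly : {poly rat} := 'X^2 - 3%:P * 'X + 1.

(* S_m = Q[t]/(f^m), canonically isomorphic to Q[t^{+-1}]/(f^m) since t is
   invertible modulo f^m (f(0) = 1).  Its additive group is the group S. *)
Definition Sm (m : nat) := {poly %/ (fpoly ^+ m)}.

Definition tS (m : nat) : Sm m := 'qX.

(* Gamma_1 = S x| <mu> ; the pair (s, n) stands for s * mu^n,
   with mu^-1 s mu = s t, hence mu^n s = (t^-n s) mu^n. *)
Definition Gam (m : nat) := (Sm m * int)%type.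

Definition gmul (m : nat) (x y : Gam m) : Gam m :=
  (x.1 + tS m ^ (- x.2) * y.1, x.2 + y.2).
Definition ginv (m : nat) (x : Gam m) : Gam m :=
  (- (tS m ^ x.2 * x.1), - x.2).
Definition gone (m : nat) : Gam m := (0, 0).
Definition gmu (m : nat) : Gam m := (0, 1).
Definition gS (m : nat) (s : Sm m) : Gam m := (s, 0).

Definition gcomm (m : nat) (x y : Gam m) : Gam m :=
  gmul (ginv x) (gmul (ginv y) (gmul x y)).

Inductive in_comm_subgroup (m : nat) : Gam m -> Prop :=
| csg_one : in_comm_subgroup (gone m)
| csg_comm x y : in_comm_subgroup (gcomm x y)
| csg_inv x : in_comm_subgroup x -> in_comm_subgroup (ginv x)
| csg_mul x y : in_comm_subgroup x -> in_comm_subgroup y ->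
                in_comm_subgroup (gmul x y).

Definition QGam (m : nat) := {fsfun Gam m -> rat with 0}.

Definition in_QComm (m : nat) (a : QGam m) : Prop :=
  forall g, g \in finsupp a -> in_comm_subgroup g.

Definition gring_ext (m : nat) (R : unitAlgType rat) (rho : Gam m -> R)
  (a : QGam m) : R :=
  \sum_(g <- finsupp a) a g *: rho g.

(* R, with rho, is the (right) Ore localization
   (Q Gamma_1) (Q[Gamma_1,Gamma_1] \ {0})^-1 (b nonzero <-> finsupp b nonempty), i.e. a right ring of fractions:
   phi : Q Gamma_1 -> R is an injective Q-algebra homomorphism (induced by the
   group homomorphism rho), sending every nonzero element of Q[Gamma_1,Gamma_1]
   to a unit, and every element of R has the form phi(a) phi(b)^-1 with
   b in Q[Gamma_1,Gamma_1] \ {0}. *)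
Definition is_Ore_localization_R1 (m : nat) (R : unitAlgType rat)
  (rho : Gam m -> R) : Prop :=
  [/\ rho (gone m) = 1,
      (forall x y, rho (gmul x y) = rho x * rho y),
      injective (gring_ext rho),
      (forall b : QGam m, in_QComm b -> finsupp b != fset0 -> gring_ext rho b \is a GRing.unit)
    & (forall r : R, exists a b : QGam m,
          [/\ in_QComm b, finsupp b != fset0 & r = gring_ext rho a * (gring_ext rho b)^-1])].

Definition two_sided_ideal (R : pzRingType) (I : R -> Prop) : Prop :=
  [/\ I 0,
      (forall x y, I x -> I y -> I (x - y)),
      (forall r x, I x -> I (r * x))
    & (forall r x, I x -> I (x * r))].

Definition simple_ring (R : pzRingType) : Prop :=
  forall I : R -> Prop, two_sided_ideal I ->
    (forall x, I x -> x = 0) \/ (forall x, I x).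

(* Main.v *)
Require Import Defs.
From HB Require Import structures.
From mathcomp Require Import all_boot all_order all_algebra.
From mathcomp Require Import finmap.
From mathcomp Require Import ring lra zify.
From Stdlib Require Import Classical.
Set Implicit Arguments. Unset Strict Implicit. Unset Printing Implicit Defensive.
Import Order.TTheory GRing.Theory Num.Theory.
Local Open Scope ring_scope.
Import Pdiv.CommonRing Pdiv.RingMonic Pdiv.Field.

Lemma fpoly_decomp : fpoly = 'X^2 + (- 3%:P * 'X + 1).
Proof. by rewrite /fpoly addrA mulNr. Qed.

Lemma size_fpoly_low : (size (- 3%:P * 'X + 1 : {poly rat})%R < 3)%N.
Proof.
rewrite (leq_ltn_trans (size_polyD _ _)) // size_polyC /= gtn_max /=.
rewrite -polyCN (leq_ltn_trans (size_mul_leq _ _)) // size_polyX size_polyC.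
by case: eqP.
Qed.

Lemma size_fpoly : size fpoly = 3%N.
Proof. by rewrite fpoly_decomp size_addl size_polyXn // size_fpoly_low. Qed.

Lemma fpoly_monic : fpoly \is monic.
Proof.
by rewrite fpoly_decomp monicE lead_coefDl ?lead_coefXn // size_polyXn size_fpoly_low.
Qed.

Definition hm (m : nat) : {poly rat} := fpoly ^+ m.

Lemma mk_monic_hm m : (0 < m)%N -> mk_monic (hm m) = hm m.
Proof.
move=> m0; rewrite /mk_monic /hm monic_exp ?fpoly_monic // andbT.
have := size_exp fpoly m; rewrite size_fpoly /=.
by case: (size _) => [|[|n]] //=; case: m m0.
Qed.

Definition eS (m : nat) : Sm m := in_qpoly (hm m) fpoly.

Lemma eS_nil m : (0 < m)%N -> eS m ^+ m = 0.
Proof.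
move=> m0; rewrite /eS -rmorphXn; apply/val_inj => /=.
by rewrite -/(hm m) mk_monic_hm // rmodpp // monic_exp // fpoly_monic.
Qed.

Lemma eS_E m : eS m = tS m ^+ 2 - 3 * tS m + 1.
Proof.
rewrite /eS /fpoly rmorphD rmorphB !rmorphM rmorph1 /=.
have -> : in_qpoly (hm m) 3%:P = 3.
  by rewrite -(rmorph_nat (in_qpoly (hm m))); congr (in_qpoly _ _); rewrite polyC_natr.
by rewrite [tS m ^+ 2]expr2.
Qed.

Lemma nil_unit (R : comUnitRingType) (x : R) n : x ^+ n = 0 -> (1 - x) \is a GRing.unit.
Proof.
move=> xn; have := subrX1 x n; rewrite xn sub0r => E.
apply/unitrP; exists (\sum_(i < n) x ^+ i); split.
  by rewrite mulrC -opprB mulNr -E opprK.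
by rewrite -opprB mulNr -E opprK.
Qed.

Lemma tS_unit m : (0 < m)%N -> tS m \is a GRing.unit.
Proof.
move=> m0; have U := nil_unit (eS_nil m0).
have E : tS m * (3 - tS m) = 1 - eS m by rewrite eS_E; ring.
by move: U; rewrite -E unitrM => /andP[].
Qed.

Lemma tS1_unit m : (0 < m)%N -> tS m - 1 \is a GRing.unit.
Proof.
move=> m0; have U : (1 - (- eS m)) \is a GRing.unit.
  by apply: (@nil_unit _ _ m); rewrite exprNn eS_nil // mulr0.
have E : (tS m - 1) * (tS m - 2) = 1 - (- eS m) by rewrite eS_E; ring.
by move: U; rewrite -E unitrM => /andP[].
Qed.

Lemma Xpow_decomp (d : nat) : exists q (a b : rat),
  'X^(d.+1) = q * fpoly + (a%:P * 'X + b%:P) /\ 0 < a /\ - a <= b.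
Proof.
elim: d => [|d [q [a [b [E [a0 ab]]]]]].
  by exists 0, 1, 0; rewrite mul0r add0r mul1r addr0 expr1; split => //; lra.
exists ('X * q + a%:P), (3 * a + b), (- a); split; last by split; lra.
rewrite exprS E /fpoly !polyCD !polyCM polyCN; ring.
Qed.

Lemma fpoly_ndvd d : ~~ (fpoly %| 'X^(d.+1) - 1).
Proof.
have [q [a [b [E [a0 _]]]]] := Xpow_decomp d.
rewrite E -addrA dvdp_addr ?dvdp_mull //.
have nz : (a%:P * 'X + b%:P - 1 : {poly rat}) != 0.
  apply/eqP => /(congr1 (fun p : {poly rat} => p`_1)).
  rewrite !coefE /= mulr1 addr0 subr0 => a0'.
  by move: a0; rewrite a0' ltxx.
rewrite gtNdvdp // size_fpoly -addrA -polyC1 -polyCB.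
rewrite (leq_ltn_trans (size_polyD _ _)) // size_polyC gtn_max.
have s2 : (size (a%:P * 'X : {poly rat})%R <= 2)%N by rewrite mul_polyC (leq_trans (size_scale_leq _ _)) ?size_polyX.
by rewrite (leq_ltn_trans s2) //=; case: (_ != 0).
Qed.

Lemma tS_pow_neq1 m d : (0 < m)%N -> tS m ^+ d.+1 != 1.
Proof.
move=> m0; apply/eqP => H.
have E : in_qpoly (hm m) ('X^(d.+1) - 1) = 0.
  by rewrite rmorphB rmorph1 rmorphXn; apply/eqP; rewrite subr_eq0; apply/eqP.
have /(congr1 val) /= := E.
rewrite mk_monic_hm // => /rmodp_eq0P; rewrite -dvdpE => dv.
have := fpoly_ndvd d; rewrite (dvdp_trans _ dv) //.
by rewrite dvdp_exp ?dvdpp.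
Qed.

Open Scope fset_scope.

Lemma gext_sup m (R : unitAlgType rat) (rho : Gam m -> R) (a : QGam m) (F : {fset Gam m}) :
  finsupp a `<=` F -> gring_ext rho a = \sum_(g <- F) a g *: rho g.
Proof.
move=> sub; rewrite /gring_ext; apply: big_fset_incl => // g _.
by rewrite memNfinsupp => /eqP ->; rewrite scale0r.
Qed.

Definition mkQ m (F : {fset Gam m}) (f : Gam m -> rat) : QGam m :=
  [fsfun g in F => f g].

Lemma mkQE m F f g : @mkQ m F f g = if g \in F then f g else 0.
Proof. by rewrite /mkQ fsfun_fun. Qed.

Lemma finsupp_mkQ m F f : finsupp (@mkQ m F f) `<=` F.
Proof.
apply/fsubsetP => g; rewrite mem_finsupp mkQE.
by case: ifP => // _; rewrite eqxx.
Qed.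

Lemma gext_mkQ m (R : unitAlgType rat) (rho : Gam m -> R) F f :
  gring_ext rho (@mkQ m F f) = \sum_(g <- F) f g *: rho g.
Proof.
rewrite (gext_sup _ (finsupp_mkQ F f)); apply: eq_fbigr => g gF _.
by rewrite mkQE gF.
Qed.

Lemma reindex m (R : unitAlgType rat) (rho : Gam m -> R) (sig tau : Gam m -> Gam m)
   (a : QGam m) (F : {fset Gam m}) :
  cancel sig tau -> cancel tau sig ->
  [fset sig x | x in finsupp a] `<=` F ->
  \sum_(g <- F) a (tau g) *: rho g = \sum_(x <- finsupp a) a x *: rho (sig x).
Proof.
move=> st ts sub.
rewrite -(big_fset_incl _ sub); last first.
  move=> g _ gN; have : tau g \notin finsupp a.
    apply: contra gN => H; apply/imfsetP; exists (tau g) => //; by rewrite ts.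
  by rewrite memNfinsupp => /eqP ->; rewrite scale0r.
rewrite big_imfset /=; last by move=> x y _ _ /(congr1 tau); rewrite !st.
by apply: eq_bigr => x _; rewrite st.
Qed.

Close Scope fset_scope.

Lemma gmulV m (m0 : (0 < m)%N) (g : Gam m) : gmul g (ginv g) = gone m.
Proof.
case: g => s n; rewrite /gmul /ginv /gone /=; congr (_, _); last by rewrite subrr.
by rewrite mulrN mulrA -exprzDr ?tS_unit // addNr expr0z mul1r subrr.
Qed.

Lemma gmulVl m (g : Gam m) : gmul (ginv g) g = gone m.
Proof.
case: g => s n; rewrite /gmul /ginv /gone /=; congr (_, _); last by rewrite addNr.
by rewrite opprK addNr.
Qed.

Lemma rho_unit m (m0 : (0 < m)%N) (R : unitAlgType rat) (rho : Gam m -> R) :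
  rho (gone m) = 1 -> (forall x y, rho (gmul x y) = rho x * rho y) ->
  forall g, rho g \is a GRing.unit.
Proof.
move=> r1 rM g; apply/unitrP; exists (rho (ginv g)).
by rewrite -!rM gmulV // gmulVl r1.
Qed.

Lemma gext_lr m (R : unitAlgType rat) (rho : Gam m -> R) :
  (forall x y, rho (gmul x y) = rho x * rho y) ->
  forall l r (a : QGam m), rho l * gring_ext rho a * rho r =
    \sum_(x <- finsupp a) a x *: rho (gmul (gmul l x) r).
Proof.
move=> rM l r a; rewrite /gring_ext mulr_sumr mulr_suml; apply: eq_bigr => x _.
by rewrite !rM -scalerAr -scalerAl.
Qed.

Lemma S_in_comm m (m0 : (0 < m)%N) (s : Sm m) : in_comm_subgroup (s, 0%R : int).
Proof.
set s' := (tS m - 1)^-1 * s.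
have -> : ((s, 0%R : int) : Gam m) = gcomm (s', 0) (gmu m).
  rewrite /gcomm /gmul /ginv /gmu /=; congr (_, _); last first.
    rewrite !mulr0 !oppr0 add0r !addr0 opprK expr0z expr1z mul1r.
    by rewrite addrC -mulN1r mul1r -mulrDl /s' mulrA mulrV ?mul1r // tS1_unit.
  exact: csg_comm.
Qed.

Lemma w_neq0 m (m0 : (0 < m)%N) (n0 : int) (d : nat) :
  tS m ^ (- (n0 + (d.+1)%:Z)) - tS m ^ (- n0) != 0.
Proof.
apply/eqP => /eqP; rewrite subr_eq0 => /eqP E.
have := tS_pow_neq1 d m0; rewrite [tS m ^+ _]exprnP.
have -> : (d.+1 : int) = (- n0) - (- (n0 + (d.+1)%:Z)) by rewrite opprK addKr.
by rewrite exprzDr ?tS_unit // -E -exprzDr ?tS_unit // subrr expr0z eqxx.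
Qed.

Lemma natmul_inj m (w : Sm m) : w != 0 -> injective (fun k : nat => w *+ k).
Proof.
move=> w0 i j /= E.
have : ((i%:R - j%:R : rat) *: w == 0).
  by rewrite scalerBl !scaler_nat E subrr.
by rewrite scaler_eq0 (negPf w0) orbF subr_eq0 eqr_nat => /eqP.
Qed.

Lemma orbit_contra m (a : QGam m) (w : Sm m) (n : int) (y : Gam m) :
  w != 0 -> y \in finsupp a -> y.2 = n ->
  (forall v, a ((v, n) : Gam m) = a ((v + w, n) : Gam m)) -> False.
Proof.
move=> w0 ya yn per.
have inS k : ((y.1 + w *+ k, n) : Gam m) \in finsupp a.
  elim: k => [|k IH]; first by rewrite mulr0n addr0 -yn -surjective_pairing.
  by rewrite mem_finsupp mulrSr addrA -per -mem_finsupp.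
set s := [seq (y.1 + w *+ k, n) | k <- iota 0 (#|` finsupp a|).+1].
have us : uniq s.
  rewrite map_inj_uniq ?iota_uniq // => i j /(congr1 fst) /= /addrI E; exact: (natmul_inj w0 E).
have sub : {subset s <= finsupp a} by move=> x /mapP [k _ ->].
have := uniq_leq_size us sub.
by rewrite size_map size_iota ltnn.
Qed.

Lemma core m (m0 : (0 < m)%N) (R : unitAlgType rat) (rho : Gam m -> R)
  (r1 : rho (gone m) = 1) (rM : forall x y, rho (gmul x y) = rho x * rho y)
  (I : R -> Prop) (HI : two_sided_ideal I)
  (Hunit : forall b : QGam m, in_QComm b -> finsupp b != fset0 ->
            gring_ext rho b \is a GRing.unit) :
  forall (d : nat) (n0 : int) (a : QGam m), finsupp a != fset0 ->
   I (gring_ext rho a) ->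
   (forall g, g \in finsupp a -> n0 <= g.2 <= n0 + d%:Z) -> I 1.
Proof.
case: HI => I0 IB IL IR.
elim=> [|d IH] n0 a a0 Ia lev.
  pose sig := fun x : Gam m => ((x.1, x.2 - n0) : Gam m).
  pose tau := fun x : Gam m => ((x.1, x.2 + n0) : Gam m).
  have st : cancel sig tau by move=> [s n]; rewrite /sig /tau /= subrK.
  have ts : cancel tau sig by move=> [s n]; rewrite /sig /tau /= addrK.
  pose c := mkQ [fset sig x | x in finsupp a]%fset (fun g => a (tau g)).
  have Ec : gring_ext rho c = gring_ext rho a * rho ((0, - n0) : Gam m).
    rewrite gext_mkQ (reindex _ st ts (fsubset_refl _)) /gring_ext mulr_suml.
    apply: eq_bigr => x _; rewrite -scalerAl -rM /gmul /= mulr0 addr0.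
    by [].
  have Uc : gring_ext rho c \is a GRing.unit.
    apply: Hunit.
      move=> g; rewrite mem_finsupp mkQE; case: ifP => [/imfsetP [x xa ->] _|_]; last first.
        by rewrite eqxx.
      have := lev x xa; rewrite addr0 => /andP [h1 h2].
      rewrite /sig /=; have -> : x.2 = n0 by apply/le_anti; rewrite h1 h2.
      by rewrite subrr; apply: S_in_comm.
    apply/fset0Pn; case/fset0Pn: a0 => x xa; exists (sig x).
    by rewrite mem_finsupp mkQE in_imfset // st -mem_finsupp.
  have Ua : gring_ext rho a \is a GRing.unit.
    by move: Uc; rewrite Ec unitrMl // (rho_unit m0 r1 rM).
  by have := IL ((gring_ext rho a)^-1) _ Ia; rewrite mulVr.
pose T (n : int) := tS m ^ (- n).
pose h : Gam m := (1, 0).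
pose k : Gam m := (T n0 - 1, 0).
pose sig1 := fun x : Gam m => ((x.1 - 1 + T x.2, x.2) : Gam m).
pose tau1 := fun x : Gam m => ((x.1 + 1 - T x.2, x.2) : Gam m).
pose sig2 := fun x : Gam m => ((x.1 + (T n0 - 1), x.2) : Gam m).
pose tau2 := fun x : Gam m => ((x.1 - (T n0 - 1), x.2) : Gam m).
have st1 : cancel sig1 tau1 by move=> [s n]; rewrite /sig1 /tau1 /=; congr (_, _); ring.
have ts1 : cancel tau1 sig1 by move=> [s n]; rewrite /sig1 /tau1 /=; congr (_, _); ring.
have st2 : cancel sig2 tau2 by move=> [s n]; rewrite /sig2 /tau2 /=; congr (_, _); ring.
have ts2 : cancel tau2 sig2 by move=> [s n]; rewrite /sig2 /tau2 /=; congr (_, _); ring.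
have E1 x : gmul (gmul (ginv h) x) h = sig1 x.
  rewrite /gmul /ginv /sig1 /T /h /=; congr (_, _).
    by rewrite !oppr0 add0r expr0z !mul1r mulr1; ring.
  by ring.
have E2 x : gmul (gmul k x) (gone m) = sig2 x.
  rewrite /gmul /gone /sig2 /k /=; congr (_, _).
    by rewrite oppr0 expr0z mul1r mulr0 addr0 addrC.
  by ring.
pose F := ([fset sig1 x | x in finsupp a] `|` [fset sig2 x | x in finsupp a])%fset.
pose A := mkQ F (fun g => a (tau1 g) - a (tau2 g)).
have EA : gring_ext rho A =
   rho (ginv h) * gring_ext rho a * rho h - rho k * gring_ext rho a * rho (gone m).
  rewrite gext_mkQ; under eq_bigr do rewrite scalerBl.
  rewrite sumrB (reindex _ st1 ts1 (fsubsetUl _ _)) (reindex _ st2 ts2 (fsubsetUr _ _)).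
  rewrite !gext_lr //; congr (_ - _); apply: eq_bigr => x _; by rewrite ?E1 ?E2.
have IA : I (gring_ext rho A) by rewrite EA; apply: IB; apply: IR; apply: IL.
have [A0|A0] := boolP (finsupp A == fset0); last first.
  apply: (IH (n0 + 1) A A0 IA) => g; rewrite mem_finsupp mkQE.
  case: ifP => [gF|_]; last by rewrite eqxx.
  move=> nz.
  have gn0 : g.2 != n0.
    apply: contra nz => /eqP g2; rewrite /tau1 /tau2 g2.
    by rewrite (_ : g.1 + 1 - T n0 = g.1 - (T n0 - 1)) ?subrr //; ring.
  have [i1|i2] : (tau1 g \in finsupp a) \/ (tau2 g \in finsupp a).
    rewrite !mem_finsupp; apply/orP; apply: contraR nz; rewrite negb_or !negbK.
    by case/andP => /eqP -> /eqP ->; rewrite subrr.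
    have := lev _ i1; rewrite /tau1 /= => /andP [l1 l2].
    move: gn0 => /eqP gn0; move: l1 l2 gn0; move: (g.2) => z l1 l2 gn0; apply/andP; split; lia.
  have := lev _ i2; rewrite /tau2 /= => /andP [l1 l2].
  move: gn0 => /eqP gn0; move: l1 l2 gn0; move: (g.2) => z l1 l2 gn0; apply/andP; split; lia.
have per g : a (tau1 g) = a (tau2 g).
  have : A g = 0 by rewrite fsfun_dflt // (eqP A0).
  rewrite mkQE; case: ifP => [_ /eqP|gF _]; first by rewrite subr_eq0 => /eqP.
  have t1 : tau1 g \notin finsupp a.
    apply: contra (negbT gF) => H; rewrite in_fsetU; apply/orP; left.
    by apply/imfsetP; exists (tau1 g) => //; rewrite ts1.
  have t2 : tau2 g \notin finsupp a.
    apply: contra (negbT gF) => H; rewrite in_fsetU; apply/orP; right.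
    by apply/imfsetP; exists (tau2 g) => //; rewrite ts2.
  by rewrite !fsfun_dflt.
pose n1 := n0 + (d.+1)%:Z.
have [/hasP [y ya /eqP yn]|none] := boolP (has (fun y : Gam m => y.2 == n1) (finsupp a)).
  exfalso; apply: (orbit_contra (w_neq0 m0 n0 d) ya yn) => v.
  have := per ((v - 1 + T n1, n1) : Gam m).
  rewrite /tau1 /tau2 /= => E.
  rewrite (_ : v = v - 1 + T n1 + 1 - T n1); last by ring.
  rewrite E; congr (a (_, _)); rewrite /T /n1; ring.
apply: (IH n0 a a0 Ia) => g ga; have := lev g ga.
have gn : g.2 != n1 by apply: contra none => gn; apply/hasP; exists g.
move: gn => /eqP; move: (g.2) => z gn /andP [l1 l2]; apply/andP; split; rewrite /n1 in gn; lia.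
Qed.

Theorem proposition4p2 (m : nat) (m_gt0 : (0 < m)%N)
  (R : unitAlgType rat) (rho : Gam m -> R) :
  is_Ore_localization_R1 rho -> simple_ring R.
Proof.
move=> [r1 rM inj Hunit Hfrac] I HI.
have [[x [Ix x0]]|none] := classic (exists x, I x /\ x <> 0); last first.
  left => x Ix; apply: NNPP => x0; apply: none; by exists x.
right.
have [a [b [bC b0 xE]]] := Hfrac x.
have Ub := Hunit b bC b0.
have Ia : I (gring_ext rho a).
  case: (HI) => _ _ _ IR.
  by have := IR (gring_ext rho b) _ Ix; rewrite xE divrK.
have a0 : finsupp a != fset0.
  apply/negP => /eqP e; apply: x0; by rewrite xE /gring_ext e big_seq_fset0 mul0r.
pose N := (\max_(g <- finsupp a) `|g.2|%N)%N.
have I1 : I 1.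
  apply: (core m_gt0 r1 rM HI Hunit (d := (N + N)%N) (n0 := - (N%:Z)) a0 Ia).
  move=> g ga; have := @leq_bigmax_seq _ _ _ (fun g : Gam m => `|g.2|%N) g ga isT.
  rewrite -/N; move: (g.2) => z hz; apply/andP; split; lia.
case: HI => _ _ _ IR y; by have := IR y _ I1; rewrite mul1r.
Qed.
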